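(* Let $T\in(0,\infty)$ and $Q\in\mathbb N$. Then for all $n\in\mathbb N_0$ and $k\in\mathbb N_0\cap[0,2Q-n)$, $$\sum_{t\in[0,T]}\bar q^{n,Q}(t)\,\frac{(T-t)^k}{k!}=\frac{T^{n+k}}{(n+k)!}.$$
   Context: For $n\in\mathbb N$ let $c^n_1,\dots,c^n_n\in[-1,1]$ be the $n$ distinct roots of $x\mapsto\frac{1}{2^nn!}\frac{d^n}{dx^n}[(x^2-1)^n]$. For $a\in\mathbb R$, $b\in[a,\infty)$ let $q^{n,[a,b]}\colon[a,b]\to\mathbb R$ be $q^{n,[a,b]}(t)=\int_a^b\prod_{i:\,c^n_i\neq\frac{2t-(a+b)}{b-a}}\frac{2x-(b-a)c^n_i-(a+b)}{2t-(b-a)c^n_i-(a+b)}\,dx$ if $a<b$ and $\frac{2t-(a+b)}{b-a}\in\{c^n_1,\dots,c^n_n\}$, and $q^{n,[a,b]}(t)=0$ otherwise. Sums $\sum_{t\in[a,b]}$ range over the finitely many points with nonzero weight. For $Q\in\mathbb N$ define $\bar q^{n,Q}\colon[0,T]\to\mathbb R$ by $\bar q^{0,Q}(t)=\mathbb 1_{\{0\}}(t)$ and $\bar q^{n,Q}(t)=\sum_{s\in[0,t]}\bar q^{n-1,Q}(s)\,q^{Q,[s,T]}(t)$ for $n\in\mathbb N$. *)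

(* Defs.v *)
From HB Require Import structures.
From mathcomp Require Import all_boot all_order all_algebra.
From mathcomp Require Import all_classical all_reals all_analysis.
Set Implicit Arguments. Unset Strict Implicit. Unset Printing Implicit Defensive.
Import Order.TTheory GRing.Theory Num.Theory.
Import numFieldNormedType.Exports.
Local Open Scope classical_set_scope.
Local Open Scope ring_scope.

Section GL.
Variable R : realType.

Definition legendre (n : nat) : {poly R} :=
  ((2 ^ n * n`!)%:R)^-1 *: (('X ^+ 2 - 1) ^+ n)^`(n).

Definition legendre_roots (n : nat) : set R := [set c | root (legendre n) c].

Definition glq (n : nat) (a b t : R) : R :=
  let x := (2 * t - (a + b)) / (b - a) in
  if (a < b) && root (legendre n) x then
    Rintegral (@lebesgue_measure R) `[a, b]
      (fun y => \big[*%R/1]_(c \in legendre_roots n `\ x)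
          ((2 * y - (b - a) * c - (a + b)) / (2 * t - (b - a) * c - (a + b))))
  else 0.

Fixpoint qbar (T : R) (Q : nat) (n : nat) : R -> R :=
  match n with
  | 0%N => fun t => if t == 0 then 1 else 0
  | m.+1 => fun t => \sum_(s \in `[0, t]) (qbar T Q m s * glq Q s T t)
  end.

End GL.

(* Main.v *)
Require Import Defs.
From HB Require Import structures.
From mathcomp Require Import all_boot all_order all_algebra.
From mathcomp Require Import all_classical all_reals all_analysis.
From mathcomp Require Import zify ring lra.
Import Order.TTheory GRing.Theory Num.Theory.
Import numFieldNormedType.Exports.
Local Open Scope classical_set_scope.
Local Open Scope ring_scope.

Set Implicit Arguments. Unset Strict Implicit.
Section S.
Variable R : realType.
Implicit Types p q : {poly R}.

Definition prim p : {poly R} :=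
  \poly_(i < (size p).+1) (if i is j.+1 then p`_j / j.+1%:R else 0).

Lemma deriv_prim p : (prim p)^`() = p.
Proof.
apply/polyP => i; rewrite coef_deriv coef_poly.
case: ltnP => H.
  rewrite -[_ *+ i.+1]mulr_natr divfK // pnatr_eq0.
by rewrite mul0rn nth_default // -ltnS.
Qed.

Lemma Rint_poly p a b : a < b ->
  Rintegral lebesgue_measure `[a, b] (horner p) = (prim p).[b] - (prim p).[a].
Proof.
move=> ab; rewrite /Rintegral (continuous_FTC2 ab (F := horner (prim p))) //.
- apply: continuous_subspaceT => x; exact: continuous_horner.
- split.
  + move=> x _; exact: derivable_horner.
  + apply/cvg_at_right_filter; exact: continuous_horner.
  + apply/cvg_at_left_filter; exact: continuous_horner.
- by move=> x _; rewrite -derivE deriv_prim.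
Qed.

Definition Ipol (a b : R) p := (prim p).[b] - (prim p).[a].

Lemma deriv0_const q : q^`() = 0 -> q = (q`_0)%:P.
Proof.
move=> dq; apply/polyP => i; rewrite coefC; case: i => [|i] //=.
have := congr1 (fun r : {poly R} => r`_i) dq; rewrite coef_deriv coef0 => /eqP.
by rewrite mulrn_eq0 /= => /eqP.
Qed.

Lemma Ipol_antider F p a b : F^`() = p -> Ipol a b p = F.[b] - F.[a].
Proof.
move=> dF; rewrite /Ipol.
have : (prim p - F)^`() = 0 by rewrite derivB deriv_prim dF subrr.
move/deriv0_const => E.
have -> : prim p = F + ((prim p - F)`_0)%:P by rewrite -E addrC subrK.
by rewrite !hornerD !hornerC opprD addrACA subrr addr0.
Qed.

Lemma Ipol_deriv F a b : Ipol a b F^`() = F.[b] - F.[a].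
Proof. exact: Ipol_antider. Qed.

Lemma IpolD a b p q : Ipol a b (p + q) = Ipol a b p + Ipol a b q.
Proof.
rewrite (@Ipol_antider (prim p + prim q)) ?derivD ?deriv_prim //.
by rewrite /Ipol !hornerD opprD addrACA.
Qed.

Lemma IpolZ a b c p : Ipol a b (c *: p) = c * Ipol a b p.
Proof.
rewrite (@Ipol_antider (c *: prim p)) ?derivZ ?deriv_prim //.
by rewrite /Ipol !hornerZ mulrBr.
Qed.

Lemma IpolN a b p : Ipol a b (- p) = - Ipol a b p.
Proof. by rewrite -scaleN1r IpolZ mulN1r. Qed.

Lemma Ipol0 a b : Ipol a b 0 = 0.
Proof. by rewrite -(scale0r 0) IpolZ mul0r. Qed.

Lemma Ipol_sum a b (I : Type) (s : seq I) (f : I -> {poly R}) :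
  Ipol a b (\sum_(i <- s) f i) = \sum_(i <- s) Ipol a b (f i).
Proof.
elim: s => [|x s IH]; first by rewrite !big_nil Ipol0.
by rewrite !big_cons IpolD IH.
Qed.

Lemma Ipol_parts a b u v :
  Ipol a b (u^`() * v) = (u * v).[b] - (u * v).[a] - Ipol a b (u * v^`()).
Proof.
by rewrite -Ipol_deriv derivM IpolD addrK.
Qed.

Lemma Ipol_comp a b p (al be : R) : al != 0 ->
  Ipol a b (p \Po (al *: 'X + be%:P)) = al^-1 * Ipol (al * a + be) (al * b + be) p.
Proof.
move=> al0.
rewrite (@Ipol_antider (al^-1 *: (prim p \Po (al *: 'X + be%:P)))).
  by rewrite /Ipol !hornerZ !horner_comp !hornerE mulrBr.
rewrite derivZ deriv_comp deriv_prim derivD derivC derivZ derivX addr0.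
by rewrite -scalerAr scalerA mulVf // scale1r mulr1.
Qed.
End S.

Set Implicit Arguments. Unset Strict Implicit.
Section Leg.
Variable R : realType.
Implicit Types p q : {poly R}.

Lemma dvd_deriv (a : R) j p : ('X - a%:P) ^+ j.+1 %| p -> ('X - a%:P) ^+ j %| p^`().
Proof.
case/dvdpP => q ->; rewrite derivM; apply: dvdp_add.
  by apply: dvdp_mull; rewrite exprS dvdp_mulIr.
rewrite (deriv_exp ('X - a%:P)) /= -mulr_natr.
exact: (dvdp_mull _ (dvdp_mulr _ (dvdp_mull _ (dvdpp _)))).
Qed.

Definition Fl (Q : nat) : {poly R} := ('X ^+ 2 - 1) ^+ Q.

Lemma Fl_fact Q : Fl Q = ('X - 1%:P) ^+ Q * ('X - (-1)%:P) ^+ Q.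
Proof.
rewrite /Fl -exprMn; congr (_ ^+ _).
by rewrite polyCN opprK polyC1 mulrDr !mulrBl mul1r mulr1 addrA subrK expr2 mulr1.
Qed.

Lemma Fl_dvd Q k (a : R) : (k <= Q)%N -> a = 1 \/ a = -1 ->
  ('X - a%:P) ^+ (Q - k) %| (Fl Q)^`(k).
Proof.
move=> kQ ha; elim: k kQ => [|k IH] kQ.
  rewrite subn0 derivn0 Fl_fact.
  by case: ha => ->; [apply: dvdp_mulr | apply: dvdp_mull].
rewrite derivnS; apply: dvd_deriv.
by rewrite subnSK //; apply: IH; apply: ltnW.
Qed.

Lemma Fl_root Q k (a : R) : (k < Q)%N -> a = 1 \/ a = -1 -> root ((Fl Q)^`(k)) a.
Proof.
move=> kQ ha; rewrite -dvdp_XsubCl.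
apply: (@dvdp_trans _ (('X - a%:P) ^+ (Q - k))); last exact: Fl_dvd (ltnW kQ) ha.
rewrite -(subnSK kQ) exprS; exact: dvdp_mulIl.
Qed.

Lemma rolle_poly p a b : a < b -> p.[a] = p.[b] ->
  exists2 c, c \in `]a, b[ & root p^`() c.
Proof.
move=> ab pab.
have [c cab dc] := @Rolle R (horner p) a b ab (fun x _ => @derivable_horner R p x)
   (continuous_subspaceT (fun x => @continuous_horner R p x)) pab.
exists c => //; apply/rootP.
by rewrite derivE derive1E (@derive_val _ _ _ _ _ _ _ dc).
Qed.

Lemma rolle_list p x0 L : path <%R x0 L -> all (root p) (x0 :: L) ->
  exists M : seq R, [/\ size M = size L, sorted <%R M, all (root p^`()) M &
    all (fun c => (x0 < c) && (c < last x0 L)) M].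
Proof.
elim: L x0 => [|x1 L IH] x0 /=; first by move=> _ _; exists [::].
case/andP => x01 pL /and3P[r0 r1 rL].
have [c cx dc] := rolle_poly x01 (etrans (rootP r0) (esym (rootP r1))).
have := IH x1 pL; rewrite /= r1 rL => /(_ isT) [M [sM oM rM bM]].
have x1last : x1 <= last x1 L.
  have := mem_last x1 L; rewrite inE => /orP[/eqP->//|].
  move: pL; rewrite lt_path_sortedE => /andP[/allP H _] /H; exact: ltW.
move: cx; rewrite in_itv /= => /andP[x0c cx1].
exists (c :: M); split => //=.
- by rewrite sM.
- rewrite lt_path_sortedE oM andbT; apply/allP => m /(allP bM) /andP[+ _].
  exact: lt_trans.
- by rewrite dc.
- rewrite x0c (lt_le_trans cx1 x1last) /=; apply/allP => m /(allP bM) /andP[h ->].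
  by rewrite (lt_trans x01 h).
Qed.

Lemma Fl_roots Q k : (k <= Q)%N -> exists rs : seq R,
  [/\ size rs = k, sorted <%R rs, all (fun c => (-1 < c) && (c < 1)) rs &
      all (root ((Fl Q)^`(k))) rs].
Proof.
elim: k => [|k IH] kQ; first by exists [::].
have [rs [srs ors brs rrs]] := IH (ltnW kQ).
have pth : path <%R (-1) (rs ++ [:: 1]).
  rewrite cat_path /= andbT.
  have -> : path <%R (-1) rs.
    by rewrite lt_path_sortedE ors andbT; apply/allP => c /(allP brs) /andP[].
  have := mem_last (-1) rs; rewrite inE => /orP[/eqP->|/(allP brs)/andP[]//].
  by rewrite (@lt_trans _ _ 0) ?ltrN10 ?ltr01.
have rts : all (root ((Fl Q)^`(k))) (-1 :: rs ++ [:: 1]).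
  rewrite /= all_cat rrs /= !Fl_root //; by [right | left].
have [M [sM oM rM bM]] := rolle_list pth rts.
exists M; split => //.
- by rewrite sM size_cat srs addn1.
- by move: bM; rewrite last_cat /=.

Qed.

Lemma size_Fl Q : size (Fl Q) = (2 * Q).+1.
Proof.
have := size_exp ('X ^+ 2 - 1 : {poly R}) Q.
rewrite size_Xn_sub_1 // /Fl => <-; rewrite prednK // lt0n size_poly_eq0.
by rewrite expf_neq0 // -size_poly_eq0 size_Xn_sub_1.
Qed.

Lemma Fl_derivQ_coef Q : ((Fl Q)^`(Q))`_Q != 0.
Proof.
rewrite coef_derivn addnn -mul2n.
have : lead_coef (Fl Q) = 1 by apply/eqP; apply: monic_exp; exact: monic_Xn_sub_1.
rewrite lead_coefE size_Fl /= => ->.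
by rewrite mulrn_eq0 oner_eq0 orbF -lt0n ffact_gt0 mul2n -addnn leq_addr.
Qed.

Lemma size_FlQ Q : (size ((Fl Q)^`(Q)) <= Q.+1)%N.
Proof.
apply/leq_sizeP => j jQ; rewrite coef_derivn nth_default ?mul0rn //.
by rewrite size_Fl; lia.
Qed.

Lemma legendreE Q : legendre R Q = ((2 ^ Q * Q`!)%:R)^-1 *: (Fl Q)^`(Q).
Proof. by []. Qed.

Lemma legendre_c0 Q : ((2 ^ Q * Q`!)%:R : R)^-1 != 0.
Proof. by rewrite invr_eq0 pnatr_eq0 muln_eq0 expn_eq0 /= -lt0n fact_gt0. Qed.

Lemma legendre_roots_ex Q : exists rs : seq R,
  [/\ uniq rs, size rs = Q, all (fun c => (-1 <= c) && (c <= 1)) rs,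
    size (legendre R Q) = Q.+1 & forall c, root (legendre R Q) c = (c \in rs)].
Proof.
have [rs [srs ors brs rrs]] := Fl_roots (leqnn Q).
have urs : uniq rs by apply: lt_sorted_uniq.
have P0 : legendre R Q != 0.
  rewrite legendreE scaler_eq0 negb_or legendre_c0 /=.
  apply/eqP => E; move: (Fl_derivQ_coef Q); by rewrite E coef0 eqxx.
have rootE c : root (legendre R Q) c = root ((Fl Q)^`(Q)) c.
  by rewrite legendreE rootZ // legendre_c0.
have sP : size (legendre R Q) = Q.+1.
  apply/eqP; rewrite eqn_leq; apply/andP; split.
    by rewrite legendreE (leq_trans (size_scale_leq _ _)) // size_FlQ.
  rewrite -{1}srs; apply: (max_poly_roots P0 _ urs).
  by apply/allP => c /(allP rrs); rewrite rootE.
exists rs; split => //.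
- by apply/allP => c /(allP brs) /andP[h1 h2]; rewrite !ltW.
- move=> c; apply/idP/idP; last by move=> /(allP rrs); rewrite rootE.
  move=> rc; apply/negPn/negP => crs.
  have Hall : all (root (legendre R Q)) (c :: rs).
    by rewrite /= rc; apply/allP => d /(allP rrs); rewrite rootE.
  have Hu : uniq (c :: rs) by rewrite /= crs urs.
  by have := max_poly_roots P0 Hall Hu; rewrite /= sP srs ltnn.
Qed.

Lemma orth_aux Q j q : (j <= Q)%N -> (size q <= j)%N ->
  Ipol (-1) 1 ((Fl Q)^`(j) * q) = 0.
Proof.
elim: j q => [|j IH] q jQ sq.
  by move: sq; rewrite leqn0 size_poly_eq0 => /eqP->; rewrite mulr0 Ipol0.
rewrite derivnS Ipol_parts !hornerM.
rewrite (rootP (Fl_root jQ (or_introl erefl))).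
rewrite (rootP (Fl_root jQ (or_intror erefl))) !mul0r subrr sub0r.
rewrite IH ?oppr0 // ?(ltnW jQ) //.
have [->|q0] := eqVneq q 0; first by rewrite deriv0 size_poly0.
by rewrite -ltnS (leq_trans (lt_size_deriv q0)).
Qed.

Lemma orth Q q : (size q <= Q)%N -> Ipol (-1) 1 (legendre R Q * q) = 0.
Proof.
by move=> sq; rewrite legendreE -scalerAl IpolZ orth_aux // mulr0.
Qed.

End Leg.

Set Implicit Arguments. Unset Strict Implicit.

Lemma fsum_seq (R : realType) (A : set R) (U : seq R) (F : R -> R) : uniq U ->
  (forall x, F x != 0 -> x \in U) -> (forall x, x \in U -> F x != 0 -> A x) ->
  \sum_(x \in A) F x = \sum_(x <- U) F x.
Proof.
move=> uU FU UA.
rewrite -(fsbig_widen (A `&` [set` U]) A F) //; last first.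
  move=> x [Ax nAU] /=; apply: contra_notP nAU => /eqP Fx; split => //=; exact: FU.
rewrite (fsbig_fwiden U) //.
- move=> x [/= xU nAU]; apply: contra_notP nAU => /eqP Fx; split => //; exact: UA.
Qed.

Lemma size_sum_le (R : realType) (I : eqType) (s : seq I) (f : I -> {poly R}) n :
  (forall i, i \in s -> size (f i) <= n)%N -> (size (\sum_(i <- s) f i)%R <= n)%N.
Proof.
elim: s => [|i s IH] H; first by rewrite big_nil size_poly0.
rewrite big_cons (leq_trans (size_polyD _ _)) // geq_max H ?mem_head //.
by apply: IH => j js; apply: H; rewrite inE js orbT.
Qed.

Section Gauss.
Variable R : realType.
Variable Q : nat.
Variable rs : seq R.
Hypothesis urs : uniq rs.
Hypothesis srs : size rs = Q.
Hypothesis sP : size (legendre R Q) = Q.+1.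
Hypothesis rootP_rs : forall c, root (legendre R Q) c = (c \in rs).

Definition Lag (x : R) : {poly R} :=
  (\prod_(c <- rem x rs) (x - c))^-1 *: \prod_(c <- rem x rs) ('X - c%:P).

Lemma Lag_eval x y : x \in rs -> y \in rs -> (Lag x).[y] = (y == x)%:R.
Proof.
move=> xr yr; rewrite /Lag hornerZ horner_prod.
rewrite [X in _ * X](eq_bigr (fun c => y - c)); last by move=> c _; rewrite hornerXsubC.
have [->|yx] := eqVneq y x.
  rewrite mulVf //; rewrite prodf_seq_neq0; apply/allP => c cr /=.
  by rewrite subr_eq0; apply: contraTneq cr => <-; rewrite mem_rem_uniqF.
rewrite (_ : \prod_(c <- rem x rs) (y - c) = 0) ?mulr0 //.
apply/eqP; rewrite prodf_seq_eq0; apply/hasP; exists y; first exact: rem_mem.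
by rewrite subrr eqxx.
Qed.

Lemma size_Lag x : x \in rs -> (size (Lag x) <= Q)%N.
Proof.
move=> xr; rewrite (leq_trans (size_scale_leq _ _)) // size_prod_XsubC size_rem //.
have : (0 < size rs)%N by case: (rs) xr.
by rewrite srs => /prednK ->.
Qed.

Lemma interp (m : {poly R}) : (size m <= Q)%N -> m = \sum_(x <- rs) m.[x] *: Lag x.
Proof.
move=> sm; apply/eqP; rewrite -subr_eq0; apply/negPn/negP => d0.
set d := m - _ in d0.
have sd : (size d <= Q)%N.
  rewrite (leq_trans (size_polyD _ _)) // size_polyN geq_max sm /=.
  apply: size_sum_le => x xr; rewrite (leq_trans (size_scale_leq _ _)) //.
  exact: size_Lag.
have rd : all (root d) rs.
  apply/allP => y yr; apply/rootP; rewrite /d hornerD hornerN horner_sum.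
  under eq_big_seq => x xr do rewrite hornerZ Lag_eval //.
  rewrite (bigD1_seq y) //= eqxx mulr1 big1 ?addr0 ?subrr // => x /negbTE.
  by rewrite eq_sym => ->; rewrite mulr0.
by move: (max_poly_roots d0 rd urs); rewrite srs ltnNge sd.
Qed.

Lemma gauss (r : {poly R}) : (size r <= 2 * Q)%N ->
  Ipol (-1) 1 r = \sum_(x <- rs) Ipol (-1) 1 (Lag x) * r.[x].
Proof.
move=> sr.
have P0 : legendre R Q != 0 by rewrite -size_poly_eq0 sP.
rewrite {1}(divp_eq r (legendre R Q)) IpolD [_ %/ _ * _]mulrC orth ?add0r; last first.
  by rewrite size_divp // sP /= leq_subLR addnn -mul2n.
have sm : (size (r %% legendre R Q)%R <= Q)%N.
  by rewrite -ltnS -sP ltn_modp.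
rewrite {1}(interp sm) Ipol_sum; apply: eq_big_seq => x xr; rewrite IpolZ mulrC.
congr (_ * _).
rewrite {2}(divp_eq r (legendre R Q)) hornerD hornerM.
by move: xr; rewrite -rootP_rs => /rootP ->; rewrite mulr0 add0r.
Qed.

End Gauss.

Set Implicit Arguments. Unset Strict Implicit.

Section Main.
Variable R : realType.
Variable Q : nat.
Variable rs : seq R.
Hypothesis urs : uniq rs.
Hypothesis srs : size rs = Q.
Hypothesis sP : size (legendre R Q) = Q.+1.
Hypothesis rootP_rs : forall c, root (legendre R Q) c = (c \in rs).
Hypothesis brs : all (fun c => (-1 <= c) && (c <= 1)) rs.
Variable T : R.

Definition tau s x := s + (T - s) * (x + 1) / 2.

Lemma glq_nz s t : glq Q s T t != 0 -> s < T /\ exists2 x, x \in rs & t = tau s x.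
Proof.
rewrite /glq /=; case: ifP => [/andP[sT rt] _| _]; last by rewrite eqxx.
split => //; exists ((2 * t - (s + T)) / (T - s)); first by rewrite -rootP_rs.
have : T - s != 0 by rewrite subr_eq0 gt_eqF.
rewrite /tau; move=> H; by field.
Qed.


Lemma tau_in s x : s <= T -> -1 <= x <= 1 -> s <= tau s x <= T.
Proof. rewrite /tau => sT /andP[x1 x2]; apply/andP; split; nra. Qed.

Definition lp s : {poly R} := (2 / (T - s)) *: 'X + (- (s + T) / (T - s))%:P.

Lemma glq_tau s x : s < T -> x \in rs ->
  glq Q s T (tau s x) = (T - s) / 2 * Ipol (-1) 1 (Lag rs x).
Proof.
move=> sT xr.
have Ts : T - s != 0 by rewrite subr_eq0 gt_eqF.
have ex : (2 * tau s x - (s + T)) / (T - s) = x by rewrite /tau; field.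
rewrite /glq ex sT (rootP_rs x) xr /=.
have E : forall y : R, \big[*%R/1]_(c \in @legendre_roots R Q `\ x)
        ((2 * y - (T - s) * c - (s + T)) / (2 * tau s x - (T - s) * c - (s + T)))
    = (Lag rs x \Po lp s).[y].
  move=> y.
  have -> : @legendre_roots R Q `\ x = [set` rem x rs].
    apply/seteqP; split => c /=; rewrite /legendre_roots /=.
      move=> [rc cx]; rewrite (mem_rem_uniq _ urs) inE -rootP_rs rc andbT.
      exact/eqP.
    by rewrite (mem_rem_uniq _ urs) inE -rootP_rs => /andP[/eqP cx rc].
  rewrite -fsbig_seq ?rem_uniq //.
  rewrite horner_comp /Lag hornerZ horner_prod.
  rewrite [X in _ = _ * X](eq_bigr (fun c => (lp s).[y] - c)); last by move=> c _; rewrite hornerXsubC.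
  rewrite [RHS]mulrC -prodf_div; apply: eq_big_seq => c cr.
  have xc : x - c != 0.
    by rewrite subr_eq0; apply: contraTneq cr => <-; rewrite mem_rem_uniqF.
  rewrite /lp /tau !hornerE; field.
  rewrite xc Ts /=.
  have -> : s * 2 + (T - s) * (x + 1) - (T - s) * c - (s + T) = (T - s) * (x - c) by ring.
  by rewrite mulf_neq0.
transitivity (Rintegral lebesgue_measure `[s, T] (horner (Lag rs x \Po lp s))).
  by apply: eq_Rintegral => y _; exact: E.
rewrite Rint_poly // -/(Ipol _ _ _) /lp Ipol_comp; last by rewrite mulf_neq0 ?invr_eq0.
congr (_ * Ipol _ _ _).
- by rewrite invf_div.
- by field.
- by field.
Qed.

Hypothesis Q0 : (0 < Q)%N.

Definition tp s : {poly R} := ((T - s) / 2) *: 'X + ((s + T) / 2)%:P.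

Lemma quad s (p : {poly R}) : s < T -> (size p <= 2 * Q)%N ->
  \sum_(t \in `[s, T]) glq Q s T t * p.[t] = Ipol s T p.
Proof.
move=> sT sp.
have Ts : T - s != 0 by rewrite subr_eq0 gt_eqF.
have Ts2 : (T - s) / 2 != 0 by rewrite mulf_neq0 ?invr_eq0.
rewrite (@fsum_seq _ _ (map (tau s) rs)).
- rewrite big_map.
  under eq_big_seq => x xr do rewrite glq_tau //.
  have -> : Ipol s T p = (T - s) / 2 * Ipol (-1) 1 (p \Po tp s).
    by rewrite /tp Ipol_comp // mulrA mulfV // mul1r; congr Ipol; field.
  rewrite (gauss urs srs sP rootP_rs) ?big_distrr; last first.
    apply: (leq_trans (size_comp_poly_leq _ _)).
    have st : (size (tp s) <= 2)%N.
      rewrite (leq_trans (size_polyD _ _)) // geq_max size_polyC.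
      by rewrite (leq_trans (size_scale_leq _ _)) ?size_polyX //; case: (_ != 0).
    move: st sp Q0; move: (size p) (size (tp s)) => a b; nia.
  apply: eq_big_seq => x xr /=; rewrite -mulrA; congr (_ * (_ * _)).
  by rewrite horner_comp /tp /tau !hornerE; congr (p.[_]); field.
- rewrite map_inj_uniq // => x y H.
  have E : (T - s) * (x - y) = 2 * (tau s x - tau s y) by rewrite /tau; field.
  move: E; rewrite H subrr mulr0 => /eqP; rewrite mulf_eq0 (negbTE Ts) /=.
  by rewrite subr_eq0 => /eqP.
- move=> t; have [->|g0] := eqVneq (glq Q s T t) 0; first by rewrite mul0r eqxx.
  by move: (glq_nz g0) => [_ [x xr ->]] _; exact: map_f.
- move=> t /mapP[x xr ->] _ /=; rewrite in_itv /=.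
  apply: tau_in (ltW sT) _; exact: (allP brs x xr).
Qed.

End Main.

Set Implicit Arguments. Unset Strict Implicit.

Section Main2.
Variable R : realType.
Variable T : R.

Definition gpoly k : {poly R} := ((k`!)%:R)^-1 *: (T%:P - 'X) ^+ k.

Lemma gpolyE k t : (gpoly k).[t] = (T - t) ^+ k / (k`!)%:R.
Proof. by rewrite /gpoly hornerZ horner_exp !hornerE mulrC. Qed.

Lemma size_gpoly k : (size (gpoly k) <= k.+1)%N.
Proof.
rewrite (leq_trans (size_scale_leq _ _)) // (leq_trans (size_poly_exp_leq _ _)) //.
have : (size (T%:P - 'X : {poly R})%R <= 2)%N.
  rewrite (leq_trans (size_polyD _ _)) // geq_max size_polyN size_polyX andbT.
  by rewrite size_polyC; case: (_ != 0).
move: (size _) => a; nia.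
Qed.

Lemma Ipol_g s k : Ipol s T (gpoly k) = (T - s) ^+ k.+1 / (k.+1`!)%:R.
Proof.
rewrite (@Ipol_antider _ (- ((k.+1`!)%:R)^-1 *: (T%:P - 'X) ^+ k.+1)).
  rewrite !hornerE subrr expr0n /= mulr0 sub0r mulNr opprK mulrC //.
rewrite derivZ deriv_exp derivB derivC derivX sub0r /gpoly /=.
rewrite mulN1r mulNrn scalerN scaleNr opprK -scalerMnr scalerMnl.
congr (_ *: _); rewrite factS natrM invfM -mulr_natr mulrC mulrA mulfV ?mul1r //.
Qed.

End Main2.

Lemma sum_nz (R : realType) (U : seq R) (f : R -> R) :
  \sum_(i <- U) f i != 0 -> exists2 i, i \in U & f i != 0.
Proof.
elim: U => [|i U IH]; first by rewrite big_nil eqxx.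
rewrite big_cons; have [fi|/negPn/eqP fi0] := boolP (f i != 0).
  by move=> _; exists i; rewrite ?mem_head.
by rewrite fi0 add0r => /IH [j jU fj]; exists j => //; rewrite inE jU orbT.
Qed.

Section Main3.
Variable R : realType.
Variable Q : nat.
Variable rs : seq R.
Hypothesis urs : uniq rs.
Hypothesis srs : size rs = Q.
Hypothesis sP : size (legendre R Q) = Q.+1.
Hypothesis rootP_rs : forall c, root (legendre R Q) c = (c \in rs).
Hypothesis brs : all (fun c => (-1 <= c) && (c <= 1)) rs.
Variable T : R.
Hypothesis T0 : 0 < T.
Hypothesis Q0 : (0 < Q)%N.

Fixpoint supp (m : nat) : seq R :=
  if m is m'.+1 then undup (flatten [seq map (tau T s) rs | s <- supp m'])
  else [:: 0].

Lemma glq_le s t : glq Q s T t != 0 -> s <= t <= T.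
Proof.
move/(glq_nz rootP_rs) => [sT [x xr ->]].
apply: tau_in (ltW sT) _; exact: (allP brs x xr).
Qed.

Definition SP m := [/\ uniq (supp m), (forall s, s \in supp m -> 0 <= s <= T) &
  (forall s, qbar T Q m s != 0 -> s \in supp m)].

Lemma qbar_step m t : SP m ->
  qbar T Q m.+1 t = \sum_(s <- supp m) qbar T Q m s * glq Q s T t.
Proof.
case=> u b nz /=; apply: fsum_seq => //.
  move=> s; have [->|//] := eqVneq (qbar T Q m s) 0; first by rewrite mul0r eqxx.
  by move=> /nz.
move=> s sS; have [->|g0 _] := eqVneq (glq Q s T t) 0; first by rewrite mulr0 eqxx.
have /andP[s0 _] := b s sS; have /andP[st _] := glq_le g0.
by rewrite /= in_itv /= s0 st.
Qed.

Lemma supp_props m : SP m.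
Proof.
elim: m => [|m [u b nz]].
  split => //; first by move=> s; rewrite inE => /eqP ->; rewrite lexx ltW.
  by move=> s /=; case: (s =P 0) => [->|]; rewrite ?mem_head ?eqxx.
split; first exact: undup_uniq.
- move=> t; rewrite mem_undup => /flattenP [l /mapP [s sS ->] /mapP [x xr ->]].
  have /andP[s0 sT] := b s sS.
  have /andP[h1 h2] := tau_in sT (allP brs x xr).
  by rewrite (le_trans s0 h1) h2.
- move=> t; rewrite (qbar_step t (And3 u b nz)) => /sum_nz [s sS].
  have [->|g0 _] := eqVneq (glq Q s T t) 0; first by rewrite mulr0 eqxx.
  move: (glq_nz rootP_rs g0) => [_ [x xr ->]].
  rewrite mem_undup; apply/flattenP; exists (map (tau T s) rs); last exact: map_f.
  by apply/mapP; exists s.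
Qed.

Lemma main n : forall k, (k < 2 * Q - n)%N ->
    \sum_(t \in `[0, T]) (qbar T Q n t * ((T - t) ^+ k / (k`!)%:R))
    = T ^+ (n + k) / ((n + k)`!)%:R.
Proof.
elim: n => [|m IH] k kQ.
  rewrite (@fsum_seq _ _ [:: 0]) //.
  - by rewrite big_cons big_nil /= eqxx mul1r subr0 addr0 add0n.
  - by move=> t /=; case: (t =P 0) => [->|]; rewrite ?mem_head // mul0r eqxx.
  - by move=> t; rewrite inE => /eqP -> _; rewrite /= in_itv /= lexx ltW.
have [u b nz] := supp_props m.+1.
rewrite (@fsum_seq _ _ (supp m.+1)) //; first last.
- by move=> t tS _; rewrite /= in_itv /= b.
- move=> t; have [->|//] := eqVneq (qbar T Q m.+1 t) 0; first by rewrite mul0r eqxx.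
  by move=> /nz.
under eq_big_seq => t _ do rewrite (qbar_step t (supp_props m)) big_distrl.
rewrite exchange_big.
have [u' b' nz'] := supp_props m.
transitivity (\sum_(s <- supp m) qbar T Q m s * ((T - s) ^+ k.+1 / (k.+1`!)%:R)).
  apply: eq_big_seq => s sS.
  under eq_bigr => t _ do rewrite /= -mulrA.
  rewrite -big_distrr /=; congr (_ * _).
  have /andP[s0 sT] := b' s sS.
  have [sT'|sT'] := ltP s T; last first.
    have -> : s = T by apply/eqP; rewrite eq_le sT sT'.
    rewrite subrr expr0n /= mul0r big1 // => t _.
    have [->|g0] := eqVneq (glq Q T T t) 0; first by rewrite mul0r.
    by have [] := glq_nz rootP_rs g0; rewrite ltxx.
  under eq_bigr => t _ do rewrite -gpolyE.
  transitivity (\sum_(t \in `[s, T]) glq Q s T t * (gpoly T k).[t]).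
    symmetry; apply: fsum_seq => //.
    - move=> t; have [->|g0 _] := eqVneq (glq Q s T t) 0; first by rewrite mul0r eqxx.
      move: (glq_nz rootP_rs g0) => [_ [x xr ->]].
      rewrite mem_undup; apply/flattenP; exists (map (tau T s) rs); last exact: map_f.
      by apply/mapP; exists s.
    - move=> t _; have [->|g0 _] := eqVneq (glq Q s T t) 0; first by rewrite mul0r eqxx.
      by have /andP[h1 h2] := glq_le g0; rewrite /= in_itv /= h1 h2.
  rewrite (quad urs srs sP rootP_rs brs Q0 sT') ?Ipol_g //.
  by rewrite (leq_trans (size_gpoly T k)) //; lia.
rewrite -(@fsum_seq _ `[0, T] (supp m)) //.
- by rewrite IH ?addSnnS //; lia.
- move=> t; have [->|//] := eqVneq (qbar T Q m t) 0; first by rewrite mul0r eqxx.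
  by move=> /nz'.
- by move=> t tS _; rewrite /= in_itv /= b'.
Qed.

End Main3.

Unset Implicit Arguments. Set Strict Implicit.

Theorem lemma3p2 (R : realType) (T : R) (Q : nat) :
  0 < T -> (0 < Q)%N ->
  forall n k : nat, (k < 2 * Q - n)%N ->
    \sum_(t \in `[0, T]) (qbar T Q n t * ((T - t) ^+ k / (k`!)%:R))
    = T ^+ (n + k) / ((n + k)`!)%:R.
Proof.
move=> T0 Q0 n k kQ.
have [rs [urs srs brs sP rootE]] := @legendre_roots_ex R Q.
exact: (main urs srs sP rootE brs T0 Q0 kQ).
Qed.
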